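(* Consider a canonical noiseless MMV model $B=AX$ in which $A$ satisfies $0\le\delta^L_{2k-r+1}(A)<1$ and the nonzero rows of $X$ are in general position. Let $I_{k-r}\subset\operatorname{supp}X$ with $|I_{k-r}|=k-r$. Then for any $j\in\{1,\dots,n\}\setminus I_{k-r}$, the following are equivalent: (a) $j\in\operatorname{supp}X$; (b) $\operatorname{rank}[A_{I_{k-r}\cup\{j\}}~B]<k+1$; (c) $\mathbf a_j^{*}P^{\perp}_{R([A_{I_{k-r}}~B])}\mathbf a_j=0$.
   Context: Canonical MMV setting: $m,n,r,k$ are positive integers with $r\le m<n$ and $r\le k$. $A\in\mathbb{R}^{m\times n}$ is the sensing matrix with columns $\mathbf a_1,\dots,\mathbf a_n$; $X\in\mathbb{R}^{n\times r}$ has rows $\mathbf x^1,\dots,\mathbf x^n$, $\operatorname{supp}X=\{i:\mathbf x^i\neq 0\}$ and $|\operatorname{supp}X|=k$; $B=AX\in\mathbb{R}^{m\times r}$ has full column rank $r$. For an index set $I$, $A_I$ is the submatrix of $A$ formed by the columns indexed by $I$, and $[A_I~B]$ denotes horizontal concatenation. $R(M)$ is the column space of $M$, $P_{R(M)}$ the orthogonal projection onto it, and $P^\perp_{R(M)}=\mathrm{Id}-P_{R(M)}$; $^*$ denotes transpose. The lower restricted isometry constant $\delta^L_s(A)$ is the smallest $\delta\ge0$ such that $(1-\delta)\|\mathbf x\|_2^2\le\|A\mathbf x\|_2^2$ for all $\mathbf x$ with at most $s$ nonzero entries. ''The nonzero rows of $X$ are in general position'' means any $r$ of the $k$ nonzero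 rows of $X$ are linearly independent. *)

(* Defs.v *)
(* Real matrices are modelled over an arbitrary real closed field R. *)
From HB Require Import structures.
From mathcomp Require Import all_boot all_order all_algebra.
Set Implicit Arguments. Unset Strict Implicit. Unset Printing Implicit Defensive.
Import Order.TTheory GRing.Theory Num.Theory.
Local Open Scope ring_scope.

Section MMV.
Variable R : rcfType.

Definition supp_rows (n r : nat) (X : 'M[R]_(n, r)) : {set 'I_n} :=
  [set i | row i X != 0].

Definition supp_vec (n : nat) (x : 'cV[R]_n) : {set 'I_n} :=
  [set i | x i 0 != 0].

Definition sqnorm (n : nat) (x : 'cV[R]_n) : R := \sum_i (x i 0) ^+ 2.

Definition colsubset (m n : nat) (A : 'M[R]_(m, n)) (I : {set 'I_n}) :
  'M[R]_(m, #|I|) := colsub (fun i : 'I_#|I| => enum_val i) A.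

Definition rowsubset (n r : nat) (X : 'M[R]_(n, r)) (S : {set 'I_n}) :
  'M[R]_(#|S|, r) := rowsub (fun i : 'I_#|S| => enum_val i) X.

Definition lric_admissible (m n : nat) (A : 'M[R]_(m, n)) (s : nat) (d : R) :=
  0 <= d /\ forall x : 'cV[R]_n, (#|supp_vec x| <= s)%N ->
    (1 - d) * sqnorm x <= sqnorm (A *m x).

Definition is_lower_RIC (m n : nat) (A : 'M[R]_(m, n)) (s : nat) (d : R) :=
  lric_admissible A s d /\ forall d', lric_admissible A s d' -> d <= d'.

(* P is the orthogonal projection onto the column space R(M) *)
Definition is_orth_proj (m p : nat) (M : 'M[R]_(m, p)) (P : 'M[R]_m) :=
  P^T = P /\ P *m P = P /\ (P == M^T)%MS.

Definition rows_general_position (n r : nat) (X : 'M[R]_(n, r)) :=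
  forall S : {set 'I_n}, S \subset supp_rows X -> #|S| = r ->
    row_free (rowsubset X S).

End MMV.

(* Main.v *)
Require Import Defs.
From HB Require Import structures.
From mathcomp Require Import all_boot all_order all_algebra.
From mathcomp Require Import zify ring lra.
Import Order.TTheory GRing.Theory Num.Theory.
Local Open Scope ring_scope.

Lemma row_free_ker (F : fieldType) m n (M : 'M[F]_(m, n)) :
  (forall v : 'rV_m, v *m M = 0 -> v = 0) -> row_free M.
Proof.
move=> H; rewrite -kermx_eq0; apply/eqP/row_matrixP=> i; rewrite row0.
by apply: H; apply/sub_kermxP; exact: row_sub.
Qed.

Lemma sqnorm_eq0 (R : rcfType) n (x : 'cV[R]_n) : sqnorm x = 0 -> x = 0.
Proof.
move=> h; apply/matrixP => i j; rewrite ord1 mxE.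
have := @psumr_eq0P R _ predT (fun i => x i 0 ^+ 2) (fun i _ => sqr_ge0 _) h i isT.
by move/eqP; rewrite sqrf_eq0 => /eqP.
Qed.

Lemma sqnorm0 (R : rcfType) n : sqnorm (0 : 'cV[R]_n) = 0.
Proof. by rewrite /sqnorm big1 // => i _; rewrite mxE expr0n. Qed.

Lemma sqnorm_ge0 (R : rcfType) n (x : 'cV[R]_n) : 0 <= sqnorm x.
Proof. by apply: sumr_ge0 => i _; exact: sqr_ge0. Qed.

Lemma ric_inj (R : rcfType) m n (A : 'M[R]_(m, n)) s d :
  lric_admissible A s d -> d < 1 ->
  forall x : 'cV_n, (#|supp_vec x| <= s)%N -> A *m x = 0 -> x = 0.
Proof.
move=> [_ adm] d1 x hx hA; apply: sqnorm_eq0.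
have := adm x hx; rewrite hA sqnorm0 pmulr_rle0; last by rewrite subr_gt0.
by move=> h; apply/eqP; rewrite eq_le h sqnorm_ge0.
Qed.

Lemma tr_colsub' (R : Type) m n p (g : 'I_p -> 'I_n) (A : 'M[R]_(m, n)) :
  (colsub g A)^T = rowsub g A^T.
Proof. by apply/matrixP => i j; rewrite !mxE. Qed.

Lemma sel_out (R : pzRingType) n p (y : 'rV[R]_p) (f : 'I_p -> 'I_n) i :
  (forall l, f l != i) -> (y *m rowsub f 1%:M) 0 i = 0.
Proof.
move=> H; rewrite !mxE; apply: big1 => l _; rewrite !mxE.
by rewrite (negPf (H l)) mulr0.
Qed.

Lemma sel_at (R : pzRingType) n p (y : 'rV[R]_p) (f : 'I_p -> 'I_n) i :
  injective f -> (y *m rowsub f 1%:M) 0 (f i) = y 0 i.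
Proof.
move=> finj; rewrite !mxE (bigD1 i) //= !mxE eqxx mulr1 big1 ?addr0 // => l hl.
by rewrite !mxE (inj_eq finj) (negPf hl) mulr0.
Qed.

Section Spaces.
Variables (R : rcfType) (m n r : nat) (A : 'M[R]_(m, n)) (X : 'M[R]_(n, r)).

Lemma rowA_sub (T : {set 'I_n}) t : t \in T -> (row t A^T <= (colsubset A T)^T)%MS.
Proof.
move=> Ht; rewrite /colsubset tr_colsub'.
have := row_sub (enum_rank_in Ht t) (rowsub (fun i : 'I_#|T| => enum_val i) A^T).
by rewrite row_rowsub enum_rankK_in.
Qed.

Lemma W_sub (T : {set 'I_n}) p (Z : 'M[R]_(p, m)) :
  (forall t, t \in T -> (row t A^T <= Z)%MS) -> ((colsubset A T)^T <= Z)%MS.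
Proof.
move=> H; rewrite /colsubset tr_colsub'; apply/row_subP => i; rewrite row_rowsub.
by apply: H; exact: enum_valP.
Qed.

Lemma RB_sub : ((A *m X)^T <= (colsubset A (supp_rows X))^T)%MS.
Proof.
rewrite trmx_mul; apply/row_subP => i; rewrite row_mul mulmx_sum_row.
apply: summx_sub => l _; case: (boolP (l \in supp_rows X)) => hl.
  by apply: scalemx_sub; exact: rowA_sub.
have : row l X = 0 by move: hl; rewrite inE negbK => /eqP.
move/(congr1 (fun M : 'rV_r => M 0 i)); rewrite !mxE => ->.
by rewrite scale0r sub0mx.
Qed.

End Spaces.

Lemma keyK (R : rcfType) m n r (A : 'M[R]_(m, n)) (X : 'M[R]_(n, r)) s
  (inj : forall x : 'cV_n, (#|supp_vec x| <= s)%N -> A *m x = 0 -> x = 0)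
  (hgp : rows_general_position X) (T : {set 'I_n})
  (hTS : (#|T :|: supp_rows X| <= s)%N) (hD : #|supp_rows X :\: T| = r) :
  row_free (col_mx (colsubset A T)^T (A *m X)^T).
Proof.
apply: row_free_ker => v hv.
rewrite -(hsubmxK v) in hv *.
set y := lsubmx v in hv *; set c := rsubmx v in hv *.
rewrite mul_row_col in hv.
set f := (fun i : 'I_#|T| => enum_val i).
have finj : injective f by exact: enum_val_inj.
have eW : (colsubset A T)^T = rowsub f 1%:M *m A^T.
  by rewrite /colsubset tr_colsub' rowsubE.
set yn := y *m rowsub f 1%:M.
have yout : forall i, i \notin T -> yn 0 i = 0.
  move=> i hi; apply: sel_out => l; apply: contraNneq hi => <-; exact: enum_valP.
have cout : forall i, i \notin supp_rows X -> (c *m X^T) 0 i = 0.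
  move=> i hi; rewrite !mxE; apply: big1 => l _; rewrite mxE.
  have : row i X = 0 by move: hi; rewrite inE negbK => /eqP.
  by move/(congr1 (fun M : 'rV_r => M 0 l)); rewrite !mxE => ->; rewrite mulr0.
have e1 : (yn + c *m X^T) *m A^T = 0.
  by rewrite mulmxDl /yn -!mulmxA -eW -trmx_mul.
have z : yn + c *m X^T = 0.
  apply: trmx_inj; rewrite trmx0; apply: inj.
    apply: leq_trans hTS; apply: subset_leq_card; apply/subsetP => i.
    rewrite [i \in supp_vec _]inE; apply: contraR; rewrite in_setU negb_or => /andP[hiT hiS].

    have -> : (yn + c *m X^T)^T i 0 = yn 0 i + (c *m X^T) 0 i by rewrite !mxE.
    rewrite (yout i hiT).
    by rewrite (cout i hiS) addr0.
  by rewrite -[A]trmxK -trmx_mul e1 trmx0.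
have c0 : c = 0.
  set U := supp_rows X :\: T.
  have rf := hgp U (subsetDl _ _) hD.
  have : c *m (rowsubset X U)^T = 0.
    rewrite /rowsubset.
    have -> : (rowsub (fun i : 'I_#|U| => enum_val i) X)^T
       = colsub (fun i : 'I_#|U| => enum_val i) X^T by apply/matrixP => i l; rewrite !mxE.
    rewrite mulmx_colsub; apply/rowP => i; rewrite [LHS]mxE [RHS]mxE.
    have hU : enum_val i \in U by exact: enum_valP.
    have hnT : enum_val i \notin T by move: hU; rewrite in_setD => /andP[].
    have := congr1 (fun M : 'rV_n => M 0 (enum_val i)) z.
    by rewrite /= [LHS]mxE [RHS]mxE yout // add0r.
  move/eqP; rewrite mulmx_free_eq0 => [/eqP //|].
  rewrite /row_free mxrank_tr; move: rf; rewrite /row_free => /eqP ->.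
  by rewrite hD.
have y0 : y = 0.
  move: z; rewrite c0 mul0mx addr0 => yn0.
  apply/rowP => i.
  have := congr1 (fun M : 'rV_n => M 0 (f i)) yn0.
  by rewrite /= /yn sel_at // => ->; rewrite !mxE.
by rewrite y0 c0 row_mx0.
Qed.

Lemma sub_colL (F : fieldType) p q n (A : 'M[F]_(p, n)) (B : 'M[F]_(q, n)) :
  (A <= col_mx A B)%MS.
Proof. by rewrite -addsmxE addsmxSl. Qed.

Lemma sub_colR (F : fieldType) p q n (A : 'M[F]_(p, n)) (B : 'M[F]_(q, n)) :
  (B <= col_mx A B)%MS.
Proof. by rewrite -addsmxE addsmxSr. Qed.

Lemma quadE (R : rcfType) m p (M : 'M[R]_(m, p)) (P : 'M[R]_m) (a : 'cV[R]_m) :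
  is_orth_proj M P ->
  (a^T *m (1%:M - P) *m a) 0 0 = 0 <-> (a^T <= M^T)%MS.
Proof.
case=> hPt [hPP hPM].
have idem : (1%:M - P) *m (1%:M - P) = 1%:M - P.
  by rewrite mulmxBl mul1mx mulmxBr mulmx1 hPP subrr subr0.
set e := (1%:M - P) *m a.
have eq : a^T *m (1%:M - P) *m a = e^T *m e.
  have tB : (1%:M - P)^T = 1%:M - P.
    apply/matrixP => i l; have h := congr1 (fun M : 'M_m => M i l) hPt.
    by rewrite /= mxE in h; rewrite !mxE h eq_sym.
  rewrite /e trmx_mul tB.
  by rewrite -!mulmxA [(1%:M - P) *m (_ *m a)]mulmxA idem.
have qE : (a^T *m (1%:M - P) *m a) 0 0 = sqnorm e.
  rewrite eq /sqnorm mxE; apply: eq_bigr => i _; by rewrite mxE expr2.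
rewrite qE -(eqmxP hPM).
have eA : e = 0 <-> a^T = a^T *m P.
  split.
    move=> e0; apply: trmx_inj; rewrite trmx_mul trmxK hPt.
    by move/eqP: e0; rewrite /e mulmxBl mul1mx subr_eq0 => /eqP {1}->.
  move=> h; rewrite /e mulmxBl mul1mx; apply/eqP; rewrite subr_eq0; apply/eqP.
  by apply: trmx_inj; rewrite trmx_mul hPt -h.
split.
  move/sqnorm_eq0/eA => ->; exact: submxMl.
move/submxP => [w hw]; apply/eqP; rewrite -[sqnorm e]/(sqnorm e).
suff -> : e = 0 by rewrite sqnorm0.
apply/eA; by rewrite hw -mulmxA hPP.
Qed.

Theorem corollary1 (R : rcfType) (m n r k : nat)
    (A : 'M[R]_(m, n)) (X : 'M[R]_(n, r))
    (hm : (0 < m)%N) (hn : (0 < n)%N) (hr : (0 < r)%N) (hk : (0 < k)%N)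
    (hrm : (r <= m)%N) (hmn : (m < n)%N) (hrk : (r <= k)%N)
    (hsupp : #|supp_rows X| = k)
    (hB : \rank (A *m X) = r)
    (hRIC : exists d : R, is_lower_RIC A (2 * k - r + 1) d /\ 0 <= d < 1)
    (hgp : rows_general_position X)
    (I : {set 'I_n}) (hI : I \subset supp_rows X) (hIcard : #|I| = (k - r)%N)
    (P : 'M[R]_m) (hP : is_orth_proj (row_mx (colsubset A I) (A *m X)) P)
    (j : 'I_n) (hj : j \notin I) :
  [/\ (j \in supp_rows X) <->
        (\rank (row_mx (colsubset A (j |: I)) (A *m X)) < k + 1)%N,
      (\rank (row_mx (colsubset A (j |: I)) (A *m X)) < k + 1)%N <->
        ((col j A)^T *m (1%:M - P) *m col j A) 0 0 = 0
    & ((col j A)^T *m (1%:M - P) *m col j A) 0 0 = 0 <->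
        (j \in supp_rows X)].
Proof.
case: hRIC => d [[adm _] /andP[_ d1]].
have inj := @ric_inj _ _ _ A _ _ adm d1.
set S := supp_rows X in hsupp hI inj *.
have rkE : forall T : {set 'I_n}, \rank (row_mx (colsubset A T) (A *m X))
    = \rank (col_mx (colsubset A T)^T (A *m X)^T).
  by move=> T; rewrite -mxrank_tr tr_row_mx.
rewrite rkE.
have rkI : \rank (col_mx (colsubset A I)^T (A *m X)^T) = k.
  have hU : I :|: S = S by apply/setUidPr.
  have hD : #|S :\: I| = r.
    by rewrite cardsD (setIidPr hI) hsupp hIcard; lia.
  have := @keyK _ _ _ _ A X _ inj hgp I _ hD.
  rewrite hU hsupp => /(_ ltac:(lia)); rewrite /row_free => /eqP ->.
  by rewrite hIcard; lia.
have rkJ : j \notin S -> \rank (col_mx (colsubset A (j |: I))^T (A *m X)^T) = k.+1.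
  move=> hjS.
  have hU : #|(j |: I) :|: S| = k.+1.
    by rewrite -setUA (setUidPr hI) cardsU1 hjS hsupp.
  have hD : #|S :\: (j |: I)| = r.
    have -> : S :\: (j |: I) = S :\: I.
      apply/setP => x; rewrite !in_setD in_setU1 negb_or.
      by case: (eqVneq x j) => [->|] //=; rewrite (negPf hjS) andbF.
    by rewrite cardsD (setIidPr hI) hsupp hIcard; lia.
  have := @keyK _ _ _ _ A X _ inj hgp (j |: I) _ hD.
  rewrite hU => /(_ ltac:(lia)); rewrite /row_free => /eqP ->.
  by rewrite cardsU1 hj hIcard; lia.
have ab : j \in S -> (\rank (col_mx (colsubset A (j |: I))^T (A *m X)^T) <= k)%N.
  move=> hjS.
  have sub : (col_mx (colsubset A (j |: I))^T (A *m X)^T <= (colsubset A S)^T)%MS.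
    rewrite col_mx_sub RB_sub andbT; apply: W_sub => t; rewrite in_setU1.
    case/orP => [/eqP -> | ht]; apply: rowA_sub => //; exact: (subsetP hI).
  apply: leq_trans (mxrankS sub) _.
  by rewrite -hsupp; exact: rank_leq_row.
have sIJ : (col_mx (colsubset A I)^T (A *m X)^T
             <= col_mx (colsubset A (j |: I))^T (A *m X)^T)%MS.
  rewrite col_mx_sub; apply/andP; split; last exact: sub_colR.
  apply: W_sub => t ht; apply: (submx_trans (@rowA_sub _ _ _ A _ _ (setU1r j ht))); exact: sub_colL.
have hq := @quadE _ _ _ _ P (col j A) hP.
have hq' : ((col j A)^T *m (1%:M - P) *m col j A) 0 0 = 0 <->
    (row j A^T <= col_mx (colsubset A I)^T (A *m X)^T)%MS.
  by rewrite -tr_col -tr_row_mx.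
clear hq.
have jI : (row j A^T <= col_mx (colsubset A I)^T (A *m X)^T)%MS <->
          (\rank (col_mx (colsubset A (j |: I))^T (A *m X)^T) <= k)%N.
  split.
    move=> hjs; rewrite -rkI; apply: mxrankS; rewrite col_mx_sub sub_colR andbT.
    apply: W_sub => t; rewrite in_setU1; case/orP => [/eqP -> //| ht].
    apply: (submx_trans (@rowA_sub _ _ _ A _ _ ht)); exact: sub_colL.
  move=> h.
  have := (mxrank_leqif_sup sIJ).2; rewrite rkI.
  have -> : (k == \rank (col_mx (colsubset A (j |: I))^T (A *m X)^T)) = true.
    by apply/eqP/anti_leq; rewrite h -{1}rkI (mxrank_leqif_sup sIJ).1.
  move/esym => hsub.
  apply: submx_trans hsub.
  apply: (submx_trans (@rowA_sub _ _ _ A _ _ (setU11 j I))); exact: sub_colL.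
have ab' : j \in S <-> (\rank (col_mx (colsubset A (j |: I))^T (A *m X)^T) <= k)%N.
  split; first exact: ab.
  move=> h; case: (boolP (j \in S)) => // hjS.
  by move: h; rewrite rkJ // ltnn.
rewrite addn1 ltnS.
split.
- exact: ab'.
- by rewrite hq' jI.
- by rewrite hq' jI ab'.
Qed.
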